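(* The following statements are equivalent: (1) $G^{>}_\nu\neq\emptyset$; (2) there exists $(h,\beta)\in\Gamma(\nu)$ with $\{k:\nu_k>h(0)\}\neq\emptyset$; (3) there exists $(h,\beta)\in\Gamma(\nu)$ such that $\mathfrak F_\nu(\mathbf K^s_\nu,h,\beta)$ is finite, and $\nu_{\rm opt}=\max\{\nu_k:k=0,\dots,\mathbf K^s_\nu\}$; (4) there exist $\theta\in\operatorname{Fin}(X^{\rm in})$ and $\gamma\in\mathcal{KL}_{\rm gen}$ such that $\varphi(T^k(x))\le\gamma(\theta(x),k)$ for all $x\in X^{\rm in}$, $k\in\mathbb N$, and $\inf_{t\ge0}\gamma(\overline\theta,t)<\nu_n$ for some $n\in\mathbb N$; (5) there exists an $(X^{\rm in},T,\varphi)$-compatible Opt-Lyapunov function for $(X^{\rm in},T)$.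
   Context: Standing data: nonempty $X^{\rm in}\subseteq\mathbb R^d$, $T:\mathbb R^d\to\mathbb R^d$, $\varphi:\mathbb R^d\to\mathbb R$ with $\varphi(0)=0$; $\nu_k=\sup_{x\in X^{\rm in}}\varphi(T^k(x))$ finite for all $k$, $\nu_{\rm opt}=\sup_k\nu_k$. $G^{>}_\nu=\{k:\nu_k>\limsup_n\nu_n\}$; $\mathbf K^s_\nu=\inf\{k:\max_{0\le j\le k}\nu_j>\sup_{j>k}\nu_j\}$. $\Gamma(\nu)$: pairs $(h,\beta)$ with $h:\mathbb R\to\mathbb R$ strictly increasing continuous on $[0,1]$, $\beta\in(0,1)$, $\nu_k\le h(\beta^k)$ for all $k$. $\mathfrak F_\nu(k,h,\beta)=\ln(h^{-1}_{[0,1]}(\nu_k))/\ln\beta$ if $(h,\beta)\in\Gamma(\nu)$ and $\nu_k>h(0)$, else $+\infty$. $\overline f=\sup_{X^{\rm in}}f$, $\operatorname{Fin}(X^{\rm in})=\{f:\mathbb R^d\to\mathbb R\cup\{+\infty\}:\overline f<+\infty\}$. $\mathcal{KL}_{\rm gen}$: $\gamma:\mathbb R\times\mathbb R_+\to\mathbb R$ increasing in the first variable and decreasing in the second (not necessarily strictly). Opt-Lyapunov function for $(X^{\rm in},T)$: $V:\mathbb R^d\to[0,+\infty]$ with $\sup_{X^{\rm in}}V\in(0,1]$ and $V\circ T\le\lambda V$ for some $\lambda\in(0,1)$. Such $V$ is $(X^{\rm in},T,\varphi)$-compatible if for some $k\in G^{>}_\nu$ there exist $\varepsilon,\eta>0$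 such that for all $x\in X^{\rm in}$, $j\in\mathbb N$ with $\varphi(T^j(x))>\nu_k-\eta$, $V(T^j(x))>\varepsilon$. *)

(* Defs.v *)
From HB Require Import structures.
From mathcomp Require Import all_boot all_order all_algebra.
From mathcomp Require Import all_classical all_reals all_analysis.
Set Implicit Arguments. Unset Strict Implicit. Unset Printing Implicit Defensive.
Import Order.TTheory GRing.Theory Num.Theory.
Import numFieldNormedType.Exports.
Local Open Scope classical_set_scope.
Local Open Scope ring_scope.

Section Defs.
Variables (R : realType) (d : nat).
Notation V := 'rV[R]_d.

Definition nu (X : set V) (T : V -> V) (phi : V -> R) (k : nat) : R :=
  sup [set phi (iter k T x) | x in X].

Definition nu_opt (nu : nat -> R) : \bar R :=
  ereal_sup [set (nu k)%:E | k in [set: nat]].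

Definition Ggt (nu : nat -> R) : set nat :=
  [set k | (limn_esup (fun n => (nu n)%:E) < (nu k)%:E)%E].

Definition maxupto (nu : nat -> R) (k : nat) : R :=
  \big[Num.max/nu 0%N]_(j < k.+1) nu j.

Definition Ks_set (nu : nat -> R) : set nat :=
  [set k | (ereal_sup [set (nu j)%:E | j in [set j | (k < j)%N]] < (maxupto nu k)%:E)%E].

(* K is K^s_nu (K^s_nu finite and equal to K) *)
Definition is_Ks (nu : nat -> R) (K : nat) : Prop :=
  Ks_set nu K /\ forall k, Ks_set nu k -> (K <= k)%N.

Definition Gamma (nu : nat -> R) (h : R -> R) (beta : R) : Prop :=
  (forall s t, 0 <= s -> s < t -> t <= 1 -> h s < h t) /\
  {within `[0, 1], continuous h} /\
  0 < beta < 1 /\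
  (forall k, nu k <= h (beta ^+ k)).

Definition hinv01 (h : R -> R) (y : R) : R :=
  xget 0 [set s | 0 <= s <= 1 /\ h s = y].

Definition frakF (nu : nat -> R) (k : nat) (h : R -> R) (beta : R) : \bar R :=
  if `[< Gamma nu h beta /\ h 0 < nu k >]
  then (ln (hinv01 h (nu k)) / ln beta)%:E
  else +oo%E.

Definition fbar (X : set V) (f : V -> \bar R) : \bar R := ereal_sup (f @` X).

Definition Fin (X : set V) (f : V -> \bar R) : Prop :=
  (forall x, f x != -oo%E) /\ (fbar X f < +oo)%E.

Definition KLgen (gamma : R -> R -> R) : Prop :=
  (forall s s' t, 0 <= t -> s <= s' -> gamma s t <= gamma s' t) /\
  (forall s t t', 0 <= t -> t <= t' -> gamma s t' <= gamma s t).

Definition OptLyap (X : set V) (T : V -> V) (W : V -> \bar R) : Prop :=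
  (forall x, (0 <= W x)%E) /\
  (0 < ereal_sup (W @` X))%E /\ (ereal_sup (W @` X) <= 1)%E /\
  exists lambda : R, 0 < lambda < 1 /\ forall x, (W (T x) <= lambda%:E * W x)%E.

Definition compatible (X : set V) (T : V -> V) (phi : V -> R) (W : V -> \bar R) : Prop :=
  exists k, Ggt (nu X T phi) k /\
  exists eps eta : R, 0 < eps /\ 0 < eta /\
  forall x j, X x -> nu X T phi k - eta < phi (iter j T x) ->
    (eps%:E < W (iter j T x))%E.

End Defs.

(* Main.v *)
Require Import Defs.
From HB Require Import structures.
From mathcomp Require Import all_boot all_order all_algebra.
From mathcomp Require Import all_classical all_reals all_analysis.
From mathcomp Require Import lra.
Import Order.TTheory GRing.Theory Num.Theory.
Import numFieldNormedType.Exports.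
Local Open Scope classical_set_scope.
Local Open Scope ring_scope.
Section S.
Variable R : realType.
Implicit Types u : nat -> R.

Lemma esup_le u N (a : R) : (forall n, (N <= n)%N -> u n <= a) ->
  (limn_esup (fun n => (u n)%:E) <= a%:E)%E.
Proof.
move=> H; rewrite /limn_esup /limf_esup.
apply: ge_ereal_inf; exists (ereal_sup ((fun n => (u n)%:E) @` [set n | (N <= n)%N])).
  by exists [set n | (N <= n)%N] => //; exists N.
by apply: ge_ereal_sup => _ [n /= Hn <-]; rewrite lee_fin H.
Qed.

Lemma esup_lt u (a : R) : (limn_esup (fun n => (u n)%:E) < a%:E)%E ->
  exists N, forall n, (N <= n)%N -> u n < a.
Proof.
rewrite /limn_esup /limf_esup => /ereal_inf_lt [_ [V HV <-]] Hlt.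
case: HV => N _ HN; exists N => n Hn.
rewrite -lte_fin; apply: le_lt_trans Hlt.
by apply: ereal_sup_ubound; exists n => //; apply: HN.
Qed.

Lemma G_to u k : Ggt u k -> exists c N, c < u k /\ forall n, (N <= n)%N -> u n < c.
Proof.
rewrite /Ggt /=.
case E: (limn_esup (fun n => (u n)%:E)) => [r| |] //= H.
- have /esup_lt [N HN] : (limn_esup (fun n => (u n)%:E) < ((r + u k)/2)%:E)%E.
    by rewrite E lte_fin; rewrite lte_fin in H; lra.
  by exists ((r + u k) / 2), N; split => //; rewrite lte_fin in H; lra.
- have /esup_lt [N HN] : (limn_esup (fun n => (u n)%:E) < (u k - 1)%:E)%E.
    by rewrite E ltNyr.
  by exists (u k - 1), N; split => //; lra.
Qed.

Lemma G_of u k c N : c < u k -> (forall n, (N <= n)%N -> u n <= c) -> Ggt u k.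
Proof.
move=> H1 H2; rewrite /Ggt /=.
by apply: (le_lt_trans (@esup_le u N c H2)); rewrite lte_fin.
Qed.

Lemma bound_fin u N : exists B, forall n, (n < N)%N -> u n <= B.
Proof.
elim: N => [|N [B HB]]; first by exists 0.
exists (Num.max B (u N)) => n; rewrite ltnS leq_eqVlt => /orP [/eqP ->|Hn].
  by rewrite le_max lexx orbT.
by rewrite le_max HB.
Qed.

Lemma bound_of u c N : (forall n, (N <= n)%N -> u n < c) ->
  exists B, c <= B /\ forall n, u n <= B.
Proof.
move=> H; have [B HB] := bound_fin u N.
exists (Num.max B c); split; first by rewrite le_max lexx orbT.
move=> n; case: (ltnP n N) => Hn; first by rewrite le_max HB.
by rewrite le_max (ltW (H _ Hn)) orbT.
Qed.

Lemma cont_aff (c A : R) : {within `[0, 1], continuous (fun s : R => c + A * s)}.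
Proof.
apply: continuous_subspaceT => x.
apply: cvgD; first exact: cvg_cst.
apply: cvgMr; exact: cvg_id.
Qed.

Lemma G_Gamma u k : Ggt u k -> exists h beta, Gamma u h beta /\ h 0 < u k.
Proof.
move=> /G_to [c [N [Hck HN]]].
have [B [cB HB]] := @bound_of u c N HN.
set beta : R := 2^-1.
have b0 : 0 < beta by rewrite /beta invr_gt0.
have b1 : beta < 1 by rewrite /beta invf_lt1 // ltr1n.
have bN : 0 < beta ^+ N by rewrite exprn_gt0.
set A := (B - c + 1) / beta ^+ N.
have A0 : 0 < A by rewrite /A divr_gt0 //; lra.
exists (fun s => c + A * s), beta; split; last by rewrite mulr0 addr0.
split; first by move=> s t _ st _; rewrite ltrD2l ltr_pM2l.
split; first exact: cont_aff.
split; first by rewrite b0 b1.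
move=> n; case: (leqP N n) => Hn.
  have : 0 <= A * beta ^+ n by apply: mulr_ge0; [exact: ltW|apply: exprn_ge0; exact: ltW].
  by have := HN n Hn; lra.
have : A * beta ^+ N <= A * beta ^+ n.
  by rewrite ler_pM2l // ler_wiXn2l // ?ltW // ltnW.
have -> : A * beta ^+ N = B - c + 1 by rewrite /A divfK // gt_eqF.
by have := HB n; lra.
Qed.

Lemma near0  (h : R -> R) (e : R) : 0 < e -> {within `[0, 1], continuous h} ->
  exists s0, 0 < s0 <= 1 /\ h s0 < h 0 + e.
Proof.
move=> e0 /(continuous_within_itvP _ ltr01) [_ H _].
move/cvgrPdist_lt : H => /(_ e e0).
rewrite near_withinE /= => -[eps /= eps0 Heps].
have m0 : 0 < Num.min (eps/2) 1 by rewrite lt_min ltr01 andbT divr_gt0.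
have m1 : Num.min (eps/2) 1 <= 1 by rewrite ge_min lexx orbT.
have m2 : Num.min (eps/2) 1 < eps.
  by rewrite gt_min; apply/orP; left; lra.
exists (Num.min (eps/2) 1); split; first by rewrite m0 m1.
have := Heps (Num.min (eps/2) 1).
rewrite /ball_ /= sub0r normrN gtr0_norm // => /(_ m2 m0).
by rewrite ltr_norml => /andP[H1 H2]; lra.
Qed.
Lemma powsmall  (b s : R) : 0 < b < 1 -> 0 < s -> exists N, forall n, (N <= n)%N -> b ^+ n < s.
Proof.
move=> /andP[b0 b1] s0.
have : `|b| < 1 by rewrite gtr0_norm.
move/cvg_expr/cvgrPdist_lt/(_ s s0) => [N _ HN].
exists N => n /HN /=; rewrite sub0r normrN.
by move/(le_lt_trans (ler_norm _)).
Qed.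

Lemma Gamma_G u h beta k : Gamma u h beta -> h 0 < u k -> Ggt u k.
Proof.
move=> [hinc [hc [hb hu]]] hk.
have [s0 [/andP[s00 s01] Hs0]] := @near0 h ((u k - h 0)/2) ltac:(lra) hc.
have [N HN] := @powsmall beta s0 hb s00.
apply: (@G_of u k (h s0) N); first by lra.
move=> n /HN Hn; apply: le_trans (hu n) _; apply/ltW/hinc => //.
by apply: exprn_ge0; case/andP: hb => /ltW.
Qed.

Lemma maxupto0 u : maxupto u 0 = u 0.
Proof. by rewrite /maxupto big_ord_recl big_ord0 maxxx. Qed.

Lemma maxupto_ge u K j : (j <= K)%N -> u j <= maxupto u K.
Proof.
rewrite -ltnS => jK; rewrite /maxupto.
exact: (@le_bigmax _ _ _ (u 0%N) (fun i : 'I_K.+1 => u i) (Ordinal jK)).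
Qed.

Lemma maxupto_att u K : exists j, (j <= K)%N /\ maxupto u K = u j.
Proof.
rewrite /maxupto; apply: (big_ind (fun x => exists j, (j <= K)%N /\ x = u j)).
- by exists 0%N.
- move=> x y [i [iK ->]] [j [jK ->]]; case: (leP (u i) (u j)) => _.
    by exists j.
  by exists i.
- by move=> i _; exists i; split => //; rewrite -ltnS.
Qed.

Definition tailsup u K := ereal_sup [set (u j)%:E | j in [set j | (K < j)%N]].

Lemma G_Ks u : Ggt u !=set0 -> exists K, is_Ks u K /\ Ggt u K /\ nu_opt u = (maxupto u K)%:E.
Proof.
move=> [k /G_to [c [N [Hck HN]]]].
have ex : exists n, `[< Ks_set u n >].
  exists (maxn N k); apply/asboolP; rewrite /Ks_set /=.
  apply: (@le_lt_trans _ _ c%:E).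
    apply: ge_ereal_sup => _ [j /= Hj <-]; rewrite lee_fin; apply/ltW/HN.
    by apply: leq_trans (leq_maxl N k) (ltnW Hj).
  rewrite lte_fin; apply: lt_le_trans Hck _; apply: maxupto_ge; exact: leq_maxr.
case: (ex_minnP ex) => K /asboolP HK Hmin.
have isK : is_Ks u K by split => // m Hm; apply: Hmin; apply/asboolP.
have HS : (tailsup u K < (maxupto u K)%:E)%E := HK.
have SuK : (tailsup u K < (u K)%:E)%E.
  case Kc: K => [|K'].
    by move: HS; rewrite Kc maxupto0.
  have nK' : ~ (tailsup u K' < (maxupto u K')%:E)%E.
    by move=> H; have := Hmin K' (asboolT H); rewrite Kc ltnn.
  move/negP: nK'; rewrite -leNgt => H1.
  rewrite ltNge; apply/negP => H2.
  have H3 : (tailsup u K' <= tailsup u K)%E.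
    apply: ge_ereal_sup => _ [j /= Hj <-].
    move: Hj; rewrite leq_eqVlt => /orP[/eqP <-|Hj]; first by move: H2; rewrite -Kc.
    by rewrite /tailsup; apply: ereal_sup_ubound; exists j => //; rewrite Kc.
  have [j [jK Hj]] := maxupto_att u K.
  move: jK; rewrite Kc leq_eqVlt ltnS => /orP[/eqP Ej|jK'].
    by move: HS H2; rewrite Hj Ej -Kc => HS H2; have := lt_le_trans HS H2; rewrite ltxx.
  have H4 : maxupto u K <= maxupto u K' by rewrite Hj; apply: maxupto_ge.
  have := lt_le_trans HS (le_trans (lee_tofin H4) (le_trans H1 H3)).
  by rewrite ltxx.
have limS : (limn_esup (fun n => (u n)%:E) <= tailsup u K)%E.
  rewrite /limn_esup /limf_esup; apply: ge_ereal_inf; exists (tailsup u K) => //.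
  by exists [set j | (K < j)%N] => //; exists K.+1.
exists K; split => //; split; first exact: le_lt_trans limS SuK.
apply/eqP; rewrite eq_le; apply/andP; split.
  apply: ge_ereal_sup => _ [j _ <-]; case: (leqP j K) => Hj.
    by rewrite lee_fin; exact: maxupto_ge.
  by apply: le_trans (ltW HS); apply: ereal_sup_ubound; exists j.
by have [j [_ ->]] := maxupto_att u K; apply: ereal_sup_ubound; exists j.
Qed.

End S.

Section S2.
Variables (R : realType) (d : nat) (X : set 'rV[R]_d)
  (T : 'rV[R]_d -> 'rV[R]_d) (phi : 'rV[R]_d -> R).

Lemma phi_le_nu (X0 : X !=set0) (Hub : forall k, has_ubound [set phi (iter k T x) | x in X])
  x k : X x -> phi (iter k T x) <= nu X T phi k.
Proof.
move=> Xx; apply: sup_upper_bound; last by exists x.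
split; last exact: Hub.
by case: X0 => y Xy; exists (phi (iter k T y)); exists y.
Qed.

Lemma nu_gt (X0 : X !=set0) c k : c < nu X T phi k ->
  exists2 x, X x & c < phi (iter k T x).
Proof.
move/sup_gt => H.
have [_ [x Xx <-] Hc] : exists2 y, [set phi (iter k T x) | x in X] y & c < y.
  by apply: H; case: X0 => y Xy; exists (phi (iter k T y)); exists y.
by exists x.
Qed.

Lemma G_4 (X0 : X !=set0) (Hub : forall k, has_ubound [set phi (iter k T x) | x in X]) :
  Ggt (nu X T phi) !=set0 ->
       exists (theta : 'rV[R]_d -> \bar R) (gamma : R -> R -> R),
         Fin X theta /\ KLgen gamma /\
         (forall x k, X x -> phi (iter k T x) <= gamma (fine (theta x)) k%:R) /\
         exists n, (ereal_inf [set (gamma (fine (fbar X theta)) t)%:E | t in [set t : R | (0 <= t)%R]] < (nu X T phi n)%:E)%E.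
Proof.
move=> [k /G_to [c [N [Hck HN]]]].
have [B [cB HB]] := @bound_of _ _ c N HN.
exists (fun _ => 0%:E), (fun _ t => if t < N%:R then B else c).
split.
  split => //; rewrite /fbar; apply: (@le_lt_trans _ _ 0%:E); last by rewrite ltry.
  by apply: ge_ereal_sup => _ [x _ <-].
split.
  split; first by move=> s s' t _ _ /=.
  move=> s t t' t0 tt'; case: ifP => H1; case: ifP => H2 //.
  by move: H2; rewrite (le_lt_trans tt' H1).
split.
  move=> x m Xx; rewrite ltr_nat; case: ltnP => Hm.
    exact: (le_trans (phi_le_nu X0 Hub x m Xx) (HB m)).
  exact/ltW/(le_lt_trans (phi_le_nu X0 Hub x m Xx) (HN m Hm)).
exists k; apply: (@le_lt_trans _ _ c%:E); last by rewrite lte_fin.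
apply: ge_ereal_inf; exists c%:E => //; exists N%:R => /=; first by rewrite ler0n.
by rewrite ltxx.
Qed.

Lemma P4_G (X0 : X !=set0) :
       (exists (theta : 'rV[R]_d -> \bar R) (gamma : R -> R -> R),
         Fin X theta /\ KLgen gamma /\
         (forall x k, X x -> phi (iter k T x) <= gamma (fine (theta x)) k%:R) /\
         exists n, (ereal_inf [set (gamma (fine (fbar X theta)) t)%:E | t in [set t : R | (0 <= t)%R]] < (nu X T phi n)%:E)%E) ->
  Ggt (nu X T phi) !=set0.
Proof.
move=> [theta [gamma [[thNy thb] [[g1 g2] [Hphi [n Hn]]]]]].
have thfin x : X x -> theta x \is a fin_num.
  move=> Xx; rewrite fin_numE thNy /=.
  have : (theta x <= fbar X theta)%E by apply: ereal_sup_ubound; exists x.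
  by move=> /le_lt_trans /(_ thb); rewrite lt_neqAle => /andP[].
have bfin : fbar X theta \is a fin_num.
  case: X0 => x0 Xx0; rewrite fin_numE (lt_eqF thb) andbT.
  have : (theta x0 <= fbar X theta)%E by apply: ereal_sup_ubound; exists x0.
  move: (thfin x0 Xx0); rewrite fin_numE => /andP[H _].
  by apply: contraTneq => ->; rewrite leeNy_eq.
move/ereal_inf_lt: Hn => [_ [t0 /= t00 <-]]; rewrite lte_fin => Ht0.
set tb := fine (fbar X theta).
set N := (Num.trunc t0).+1.
exists n; apply: (@G_of _ _ n (gamma tb t0) N Ht0) => m Hm.
apply: ge_sup; first by case: X0 => y Xy; exists (phi (iter m T y)); exists y.
move=> _ [x Xx <-].
apply: le_trans (Hphi x m Xx) _.
apply: le_trans (g1 _ _ _ (ler0n _ m) _) _.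
  apply: fine_le; [exact: thfin|exact: bfin|by apply: ereal_sup_ubound; exists x].
apply: g2 => //; apply: ltW; apply: lt_le_trans (truncnS_gt t0) _.
by rewrite ler_nat.
Qed.

Lemma G_5 (X0 : X !=set0) (Hub : forall k, has_ubound [set phi (iter k T x) | x in X]) :
  Ggt (nu X T phi) !=set0 ->
  exists W : 'rV[R]_d -> \bar R, OptLyap X T W /\ compatible X T phi W.
Proof.
move=> [k Gk]; have [c [N [Hck HN]]] := @G_to _ _ _ Gk.
have Hsmall x m : X x -> c < phi (iter m T x) -> (m < N)%N.
  move=> Xx H; rewrite ltnNge; apply/negP => Hm.
  have := lt_trans H (le_lt_trans (@phi_le_nu X0 Hub x m Xx) (HN m Hm)).
  by rewrite ltxx.
set lam : R := 2^-1.
have l0 : 0 < lam by rewrite /lam invr_gt0.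
have l1 : lam < 1 by rewrite /lam invf_lt1 // ltr1n.
pose W y := ereal_inf [set (lam ^+ m)%:E | m in [set m | exists2 x, X x & iter m T x = y]].
have Wge y : (0 <= W y)%E.
  apply: le_ereal_inf_tmp => _ [m _ <-]; rewrite lee_fin; apply: exprn_ge0; exact: ltW.
have WX1 x : X x -> (W x <= 1)%E.
  move=> Xx; apply: ge_ereal_inf; exists (lam ^+ 0)%:E => //; exists 0%N => //; by exists x.
have Wlow y : (forall m x, X x -> iter m T x = y -> (m < N)%N) -> ((lam ^+ N)%:E <= W y)%E.
  move=> H; apply: le_ereal_inf_tmp => _ [m [x1 Xx1 Hm] <-]; rewrite lee_fin.
  by apply: ler_wiXn2l; [exact: ltW|exact: ltW|exact: ltnW (H m x1 Xx1 Hm)].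
have WT y : (W (T y) <= lam%:E * W y)%E.
  rewrite /W -ereal_inf_pZl //; apply: le_ereal_inf_tmp => _ [_ [m [x1 Xx1 <-] <-] <-].
  apply: ereal_inf_lbound; exists m.+1; first by exists x1.
  by rewrite exprS EFinM.
have [x0 Xx0 Hx0] := @nu_gt X0 c k Hck.
have Wx0 : ((lam ^+ N)%:E <= W x0)%E.
  apply: Wlow => m x1 Xx1 Hm; apply: (@leq_ltn_trans (k + m)); first exact: leq_addl.
  by apply: (Hsmall x1) => //; rewrite iterD Hm.
have lN : 0 < lam ^+ N by apply: exprn_gt0.
exists W; split.
  split => //; split.
    apply: (@lt_le_trans _ _ (lam ^+ N)%:E); first by rewrite lte_fin.
    by apply: le_trans Wx0 _; apply: ereal_sup_ubound; exists x0.
  split; first by apply: ge_ereal_sup => _ [x Xx <-]; exact: WX1.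
  by exists lam; split => //; rewrite l0 l1.
exists k; split => //; exists (lam ^+ N.+1), (nu X T phi k - c).
split; first exact: exprn_gt0.
split; first by rewrite subr_gt0.
move=> x j Xx Hj.
have Hc : c < phi (iter j T x) by move: Hj; rewrite opprB addrCA subrr addr0.
apply: (@lt_le_trans _ _ (lam ^+ N)%:E).
  by rewrite lte_fin exprS; nra.
apply: Wlow => m x' Xx' Hm; apply: (Hsmall x') => //; by rewrite Hm.
Qed.
End S2.

Theorem mainTheorem20 (R : realType) (d : nat) (X : set 'rV[R]_d)
  (T : 'rV[R]_d -> 'rV[R]_d) (phi : 'rV[R]_d -> R) :
  X !=set0 ->
  phi 0 = 0 ->
  (forall k, has_ubound [set phi (iter k T x) | x in X]) ->
  let nu := nu X T phi in
  [<-> Ggt nu !=set0;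
       exists h beta, Gamma nu h beta /\ [set k | h 0 < nu k] !=set0;
       exists K, is_Ks nu K /\
         (exists h beta, Gamma nu h beta /\ frakF nu K h beta \is a fin_num) /\
         nu_opt nu = (maxupto nu K)%:E;
       exists (theta : 'rV[R]_d -> \bar R) (gamma : R -> R -> R),
         Fin X theta /\ KLgen gamma /\
         (forall x k, X x -> phi (iter k T x) <= gamma (fine (theta x)) k%:R) /\
         exists n, (ereal_inf [set (gamma (fine (fbar X theta)) t)%:E | t in [set t : R | (0 <= t)%R]] < (nu n)%:E)%E;
       exists W : 'rV[R]_d -> \bar R, OptLyap X T W /\ compatible X T phi W].
Proof.
move=> X0 _ Hub u.
have P12 : Ggt u !=set0 -> exists h beta, Gamma u h beta /\ [set k | h 0 < u k] !=set0.
  move=> [k /G_Gamma [h [b [Gam Hk]]]]; exists h, b; split => //; by exists k.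
have P21 : (exists h beta, Gamma u h beta /\ [set k | h 0 < u k] !=set0) -> Ggt u !=set0.
  move=> [h [b [Gam [k Hk]]]]; exists k; exact: (@Gamma_G _ _ _ _ k Gam Hk).
have P13 : Ggt u !=set0 -> exists K, is_Ks u K /\
         (exists h beta, Gamma u h beta /\ frakF u K h beta \is a fin_num) /\
         nu_opt u = (maxupto u K)%:E.
  move=> /G_Ks [K [isK [GK Hopt]]]; exists K; split => //; split => //.
  have [h [b [Gam Hh]]] := @G_Gamma _ _ _ GK; exists h, b; split => //.
  by rewrite /frakF asboolT.
have P31 : (exists K, is_Ks u K /\
         (exists h beta, Gamma u h beta /\ frakF u K h beta \is a fin_num) /\
         nu_opt u = (maxupto u K)%:E) -> Ggt u !=set0.
  move=> [K [_ [[h [b [Gam Hf]]] _]]]; apply: P21; exists h, b; split => //.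
  by exists K; move: Hf; rewrite /frakF; case: asboolP => // -[].
have P14 := @G_4 _ _ X T phi X0 Hub.
have P41 := @P4_G _ _ X T phi X0.
have P15 := @G_5 _ _ X T phi X0 Hub.
have P51 : (exists W : 'rV[R]_d -> \bar R, OptLyap X T W /\ compatible X T phi W) -> Ggt u !=set0.
  by move=> [W [_ [k [Gk _]]]]; exists k.
tfae; move=> H.
- exact: P12.
- exact: P13 (P21 H).
- exact: P14 (P31 H).
- exact: P15 (P41 H).
- exact: P51.
Qed.
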